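(* Let $r\ge 1$ be an integer and let $Z(r)$ be the Young–Fibonacci $r$-differential poset. Write $p_n$ for the number of elements of rank $n$ in $Z(r)$, with $p_k:=0$ for $k<0$, and $\Delta p_n:=p_n-p_{n-1}$. Then: (1) for every $n\ge 0$, the matrix $DU_n+tI$ in $\mathbb{Z}[t]^{p_n\times p_n}$ has a Smith form over $\mathbb{Z}[t]$; (2) for every $n\ge 1$ and every $1\le j\le n$ one has $\Delta p_n\ge \Delta p_{n-j-\delta_{r,1}}$ (i.e. $\Delta p_n\ge\Delta p_{n-j-1}$ if $r=1$, and $\Delta p_n\ge \Delta p_{n-j}$ if $r\ge 2$); (3) for every $n\ge 0$, the cokernel of $U_n:\mathbb{Z}^{p_n}\to\mathbb{Z}^{p_{n+1}}$ is a free abelian group.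
   Context: $Z(r)$ is the set of all finite words in the alphabet $\{1_1,1_2,\dots,1_r,2\}$; the rank of a word is the sum of its letters, where each $1_i$ has value $1$ and $2$ has value $2$ (the empty word is the minimum, of rank $0$). A word $w$ covers a word $w'$ if either (a) $w'$ is obtained from $w$ by changing a letter $2$ into some $1_i$, provided only letters $2$ occur to the left of it, or (b) $w'$ is obtained from $w$ by deleting its first (leftmost) letter of the form $1_i$. This is an $r$-differential poset. For a graded poset $P$ with rank sets $P_n$, $p_n=|P_n|$, the up map $U_n:\mathbb{Z}^{P_n}\to\mathbb{Z}^{P_{n+1}}$ sends each basis element $x$ to the sum of all elements covering $x$, and the down map $D_n:\mathbb{Z}^{P_n}\to\mathbb{Z}^{P_{n-1}}$ sends $x$ to the sum of all elements covered by $x$ (so $D_{n+1}=U_n^t$); $DU_n:=D_{n+1}U_n$, viewed as a $p_n\times p_n$ integer matrix in the basis $P_n$. A matrix $B$ over a commutative ring $S$ is in Smith form if it is diagonal (off-diagonal entries zero) with diagonal entries $s_1,s_2,\dots$ such that $s_i$ divides $s_{i+1}$ in $S$ for all $i$; $B$ has a Smith form over $S$ if $PBQ$ is in Smith form for some invertible matrices $P,Q$ over $S$. *)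

(* Defs.v *)
From HB Require Import structures.
From mathcomp Require Import all_boot all_order all_algebra.
Set Implicit Arguments. Unset Strict Implicit. Unset Printing Implicit Defensive.
Import Order.TTheory GRing.Theory Num.Theory.

(* Letters of Z(r): [Some i] is the letter 1_i (value 1), [None] is the letter 2. *)
Definition letter (r : nat) := option 'I_r.
Definition two {r : nat} : letter r := None.
Definition one {r : nat} (i : 'I_r) : letter r := Some i.

Definition lval {r : nat} (a : letter r) : nat := if a is Some _ then 1 else 2.

Definition rank {r : nat} (w : seq (letter r)) : nat := \sum_(a <- w) lval a.

Definition words_upto (r n : nat) : seq (seq (letter r)) :=
  flatten [seq [seq val t | t <- enum {: k.-tuple (letter r)}] | k <- iota 0 n.+1].

(* P_n : the words of rank n (every word of rank n has length <= n),
   listed without repetition; this fixes the basis order of Z^{P_n}. *)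
Definition Pn (r n : nat) : seq (seq (letter r)) :=
  [seq w <- words_upto r n | rank w == n].

Definition p (r n : nat) : nat := size (Pn r n).

Definition covers {r : nat} (w w' : seq (letter r)) : bool :=
  (* (a) change a letter 2, preceded only by 2's, into some 1_i *)
  [exists i : 'I_r, has (fun k =>
      (w == nseq k two ++ two :: drop k.+1 w) &&
      (w' == nseq k two ++ one i :: drop k.+1 w)) (iota 0 (size w))]
  ||
  (* (b) delete the leftmost letter of the form 1_i *)
  [exists i : 'I_r, has (fun k =>
      (w == nseq k two ++ one i :: drop k.+1 w) &&
      (w' == nseq k two ++ drop k.+1 w)) (iota 0 (size w))].

Local Open Scope ring_scope.

Definition Umx (r n : nat) : 'M[int]_(p r n.+1, p r n) :=
  \matrix_(y < p r n.+1, x < p r n)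
    (covers (nth [::] (Pn r n.+1) y) (nth [::] (Pn r n) x) : int).

(* D_{n+1} = U_n^T,  DU_n = D_{n+1} U_n. *)
Definition DUmx (r n : nat) : 'M[int]_(p r n) := (Umx r n)^T *m Umx r n.

Definition DUt (r n : nat) : 'M[{poly int}]_(p r n) :=
  map_mx polyC (DUmx r n) + 'X%:M.

Definition rdvd {S : comUnitRingType} (a b : S) : Prop := exists c : S, b = c * a.

Definition is_smith_form {S : comUnitRingType} {m : nat} (B : 'M[S]_m) : Prop :=
  (forall i j : 'I_m, i != j -> B i j = 0) /\
  (forall i j : 'I_m, j = i.+1 :> nat -> rdvd (B i i) (B j j)).

Definition has_smith_form {S : comUnitRingType} {m : nat} (B : 'M[S]_m) : Prop :=
  exists P Q : 'M[S]_m, P \in unitmx /\ Q \in unitmx /\ is_smith_form (P *m B *m Q).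

(* The cokernel Z^m / A Z^n of A : Z^n -> Z^m is free abelian: there is a
   surjective homomorphism F : Z^m -> Z^k whose kernel is exactly the image
   of A (so coker A ~= Z^k). *)
Definition coker_free {m n : nat} (A : 'M[int]_(m, n)) : Prop :=
  exists k : nat, exists F : 'M[int]_(k, m),
    (forall y : 'cV[int]_k, exists x : 'cV[int]_m, F *m x = y) /\
    (forall x : 'cV[int]_m, F *m x = 0 <-> exists v : 'cV[int]_n, x = A *m v).

Definition pz (r : nat) (k : int) : int :=
  match k with Posz k' => (p r k')%:Z | Negz _ => 0 end.
Definition dp (r : nat) (k : int) : int := pz r k - pz r (k - 1).

(* Main.v *)
Require Import Defs.
From mathcomp Require Import all_boot all_order all_algebra.
Set Implicit Arguments. Unset Strict Implicit. Unset Printing Implicit Defensive.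
Import Order.TTheory GRing.Theory Num.Theory.
Require Import Defs.
From mathcomp Require Import zify ring.

Lemma covers_nil r (v : seq (letter r)) : covers [::] v = false.
Proof. by rewrite /covers; apply/negbTE; rewrite negb_or; apply/andP; split; apply/existsP=> -[]. Qed.

Lemma covers_one r (i : 'I_r) (u v : seq (letter r)) : covers (one i :: u) v = (v == u).
Proof.
rewrite /covers /=.
have -> : [exists i0, ((one i :: u == two :: u) && (v == one i0 :: u))
   || has (fun k => (one i :: u == nseq k two ++ two :: drop k.+1 (one i :: u)) &&
      (v == nseq k two ++ one i0 :: drop k.+1 (one i :: u))) (iota 1 (size u))] = false.
  apply/existsP=> -[i0] /orP[//|/hasP[k]]; rewrite mem_iota; case: k => //.
apply/existsP/eqP => [[i0]|->].
  case/orP=> [/andP[_ /eqP->]|/hasP[k]]; first by rewrite drop0.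
  by rewrite mem_iota; case: k.
by exists i; rewrite drop0 !eqxx.
Qed.
Lemma existsb_or (T : finType) (A B : pred T) :
  [exists i, A i || B i] = [exists i, A i] || [exists i, B i].
Proof.
apply/existsP/orP=> [[i /orP[]]|[/existsP[i]|/existsP[i]]] H.
- by left; apply/existsP; exists i.
- by right; apply/existsP; exists i.
- by exists i; rewrite H.
- by exists i; rewrite H orbT.
Qed.

Lemma has_iota1 (P : pred nat) n : has P (iota 1 n) = has (fun k => P k.+1) (iota 0 n).
Proof. by rewrite (iotaDl 1 0) has_map; apply: eq_has => k; rewrite /preim /= add1n. Qed.

Lemma covers_two_unf r (z x : seq (letter r)) : covers (two :: z) x =
  [exists i, x == one i :: z] || (if x is a :: x' then (a == two) && covers z x' else false).
Proof.
rewrite /covers /=.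
under eq_existsb => i do rewrite has_iota1 drop0 eqxx /=.
under [X in _ || X]eq_existsb => i do rewrite has_iota1 /=.
apply/idP/idP.
  case/orP => [/existsP[i /orP[H|/hasP[k Hk /andP[Hz /eqP Hx]]]] | /existsP[i /hasP[k Hk /andP[Hz /eqP Hx]]]].
  - by apply/orP; left; apply/existsP; exists i.
  - rewrite Hx eqxx /=; apply/orP; right; apply/orP; left; apply/existsP; exists i.
    by apply/hasP; exists k => //; rewrite eqxx andbT; rewrite eqseq_cons in Hz.
  - rewrite Hx eqxx /=; apply/orP; right; apply/orP; right; apply/existsP; exists i.
    by apply/hasP; exists k => //; rewrite eqxx andbT; rewrite eqseq_cons in Hz.
case/orP => [/existsP[i H]|].
  by apply/orP; left; apply/existsP; exists i; rewrite H.
case: x => [//|a x'] /andP[/eqP-> /orP[/existsP[i /hasP[k Hk /andP[Hz /eqP Hx]]]|/existsP[i /hasP[k Hk /andP[Hz /eqP Hx]]]]].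
  apply/orP; left; apply/existsP; exists i; apply/orP; right; apply/hasP; exists k => //.
  by rewrite Hx !eqseq_cons !eqxx Hz.
apply/orP; right; apply/existsP; exists i; apply/hasP; exists k => //.
by rewrite Hx !eqseq_cons !eqxx Hz.
Qed.

Lemma covers_two r (z x : seq (letter r)) : covers (two :: z) x = covers x z.
Proof.
move: {2}(size z + size x) (leqnn (size z + size x)) => N.
elim: N z x => [|N IH] z x.
  case: x => [|a x]; last by rewrite addnS.
  move=> _; rewrite covers_two_unf covers_nil orbF; apply/negbTE; by apply/existsP=> -[].
case: x => [|[j|] u] Hs.
- rewrite covers_two_unf covers_nil orbF; apply/negbTE; by apply/existsP=> -[].
- change (Some j :: u) with (one j :: u); rewrite covers_two_unf covers_one /= orbF.
  apply/existsP/eqP=> [[i /eqP[_ ->]]|->] //; by exists j.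
- change (None :: u) with (two :: u); rewrite covers_two_unf IH /=.
    suff -> : [exists i, two :: u == one i :: z] = false by [].
    by apply/existsP=> -[].
  by move: Hs; rewrite /= addnS addnC.
Qed.

Fixpoint sz (r' a b : nat) : nat := match r' with 0 => b | S c => (a + sz c a b)%N end.
Fixpoint qq (r' n : nat) : nat * nat :=
  match n with 0 => (0, 1)%N
  | S m => ((qq r' m).2, ((qq r' m).2 + sz r' (qq r' m).2 (qq r' m).1)%N) end.
Definition q r' n := (qq r' n).2.
Definition qm r' n := (qq r' n).1.

Fixpoint tailB (r' j c : nat) (Bn Bm : seq (seq (letter r'.+1))) :=
  match c with 0 => map (cons two) Bm
  | S c' => map (cons (one (inord j))) Bn ++ tailB j.+1 c' Bn Bm end.

Fixpoint BB (r' n : nat) : seq (seq (letter r'.+1)) * seq (seq (letter r'.+1)) :=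
  match n with 0 => ([::], [:: [::]])
  | S m => ((BB r' m).2, map (cons (one ord0)) (BB r' m).2 ++ tailB 1 r' (BB r' m).2 (BB r' m).1) end.
Definition B r' n := (BB r' n).2.
Definition Bm r' n := (BB r' n).1.

Lemma size_tailB r' j c Bn Bm : size (@tailB r' j c Bn Bm) = sz c (size Bn) (size Bm).
Proof. by elim: c j => [|c IH] j /=; rewrite ?size_map // size_cat size_map IH. Qed.

Lemma size_B r' n : size (B r' n) = q r' n /\ size (Bm r' n) = qm r' n.
Proof.
elim: n => [|n [IH1 IH2]] //; rewrite /B /Bm /q /qm /=.
by rewrite size_cat size_map size_tailB -/(B r' n) -/(Bm r' n) IH1 IH2.
Qed.

Lemma mem_tailB r' j c Bn Bm w : (j + c <= r'.+1)%N ->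
  (w \in @tailB r' j c Bn Bm) =
  match w with [::] => false | Some i :: u => (j <= i < j + c)%N && (u \in Bn)
  | None :: z => z \in Bm end.
Proof.
elim: c j w => [|c IH] j w Hc.
  rewrite /tailB; case: w => [|[i|] u].
  - by apply/mapP=> -[].
  - rewrite addn0; have -> : (j <= i < j)%N = false by case: leqP => //= H; rewrite ltnNge H.
    by apply/mapP=> -[x _ [/eqP]].
  - by rewrite mem_map // => x y [].
rewrite /= mem_cat IH ?addSnnS //.
case: w => [|[i|] u].
- by rewrite orbF; apply/mapP=> -[].
- have -> : (Some i :: u \in map (cons (one (inord j))) Bn) = (i == j :> nat) && (u \in Bn).
    apply/mapP/andP=> [[x Hx [-> ->]]|[/eqP Hi Hu]]; first by rewrite inordK ?Hx //; lia.
    by exists u => //; congr (Some _ :: _); apply/val_inj; rewrite /= inordK //; lia.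
  case: (u \in Bn); rewrite ?andbF ?andbT ?orbF //.
  apply/idP/idP; [case/orP=> [/eqP->|/andP[H1 H2]]|move=> /andP[H1 H2]]; try (apply/andP; lia).
  by apply/orP; case: (ltngtP i j) => H; [lia|right; apply/andP; lia|left; apply/eqP].
- have -> : (None :: u \in map (cons (one (inord j))) Bn) = false by apply/mapP=> -[].
  by [].
Qed.

Lemma uniq_tailB r' j c Bn Bm : (j + c <= r'.+1)%N -> uniq Bn -> uniq Bm ->
  uniq (@tailB r' j c Bn Bm).
Proof.
move=> + Un Um; elim: c j => [|c IH] j Hc /=.
  by rewrite map_inj_uniq // => x y [].
rewrite cat_uniq map_inj_uniq ?IH ?addSnnS ?Un // ?andbT /=; last by move=> x y [].
apply/hasPn => w; rewrite mem_tailB ?addSnnS //.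
case: w => [|[i|] u] //.
  case/andP=> Hi _; apply/mapP=> -[x _ [Hx _]].
  by move: Hi; rewrite Hx inordK ?ltnn //; lia.
by move=> _; apply/mapP=> -[].
Qed.

Lemma mem_BS r' n w : (w \in B r' n.+1) =
  match w with [::] => false | Some i :: u => u \in B r' n | None :: z => z \in Bm r' n end.
Proof.
rewrite /B /= mem_cat mem_tailB // -/(B r' n) -/(Bm r' n).
case: w => [|[i|] u].
- by apply/orP=> -[/mapP[]|].
- have -> : (Some i :: u \in map (cons (one ord0)) (B r' n)) = (i == ord0) && (u \in B r' n).
    by apply/mapP/andP=> [[x Hx [-> ->]]|[/eqP -> Hu]]; [|exists u].
  case: (u \in B r' n); rewrite ?andbF ?andbT //.
  case: i => [[|i] Hi]; first by rewrite orTb.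
  by apply/orP; right; rewrite /= add1n ltnS; lia.
- by have -> : (None :: u \in map (cons (one ord0)) (B r' n)) = false by apply/mapP=> -[].
Qed.

Lemma uniq_B r' n : uniq (B r' n) /\ uniq (Bm r' n).
Proof.
elim: n => [|n [U1 U2]]; first by [].
split; last by [].
rewrite /B /= cat_uniq map_inj_uniq ?uniq_tailB -/(B r' n) -/(Bm r' n) ?U1 //= ?andbT; last by move=> x y [].
 apply/hasPn => w; rewrite mem_tailB //.
case: w => [|[i|] u] //.
  by case/andP=> Hi _; apply/mapP=> -[x _ [Hx _]]; move: Hi; rewrite Hx.
by move=> _; apply/mapP=> -[].
Qed.

Lemma rank_nil r : rank ([::] : seq (letter r)) = 0%N.
Proof. by rewrite /rank big_nil. Qed.
Lemma rank_cons r (a : letter r) w : rank (a :: w) = (lval a + rank w)%N.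
Proof. by rewrite /rank big_cons. Qed.

Lemma mem_B_rank r' n w : ((w \in B r' n) = (rank w == n)) /\
   ((w \in Bm r' n) = (0 < n)%N && (rank w == n.-1)).
Proof.
elim: n w => [|n IH] w.
  rewrite /B /Bm /= in_nil inE; split => //.
  by case: w => [|a w]; rewrite ?rank_nil ?rank_cons //; case: a.
split; last by rewrite /Bm /= -/(B r' n) (IH w).1.
rewrite mem_BS; case: w => [|[i|] u]; rewrite ?rank_nil ?rank_cons //=.
- by rewrite (IH u).1 add1n eqSS.
- rewrite (IH u).2; case: n {IH} => [|n] //=; by rewrite !eqSS.
Qed.

Lemma size_le_rank r (w : seq (letter r)) : (size w <= rank w)%N.
Proof.
elim: w => [|a w IH]; rewrite ?rank_nil ?rank_cons //=.
by case: a => [i|] /=; lia.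
Qed.

Lemma mem_words_upto r n (w : seq (letter r)) : (size w <= n)%N -> w \in words_upto r n.
Proof.
move=> Hw; apply/flatten_mapP; exists (size w); first by rewrite mem_iota.
by apply/mapP; exists (in_tuple w) => //; rewrite mem_enum.
Qed.

Lemma uniq_flatten_key (T : eqType) (F : nat -> seq T) (g : T -> nat) s :
  uniq s -> (forall k, uniq (F k)) -> (forall k x, x \in F k -> g x = k) ->
  uniq (flatten [seq F k | k <- s]).
Proof.
move=> + UF Hg; elim: s => [|k s IH] //= /andP[ks Us].
rewrite cat_uniq UF IH // andbT /=; apply/hasPn => x /flatten_mapP[k' Hk' Hx].
apply/negP => Hx'; move: ks; by rewrite -(Hg _ _ Hx') (Hg _ _ Hx) Hk'.
Qed.

Lemma uniq_Pn r n : uniq (Pn r n).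
Proof.
apply: filter_uniq; apply: (@uniq_flatten_key _ _ size); first exact: iota_uniq.
  by move=> k; rewrite map_inj_uniq ?enum_uniq //; apply: val_inj.
by move=> k x /mapP[t _ ->]; rewrite size_tuple.
Qed.

Lemma mem_Pn r n (w : seq (letter r)) : (w \in Pn r n) = (rank w == n).
Proof.
rewrite mem_filter; case: eqP => //= H; apply: mem_words_upto.
by rewrite -H size_le_rank.
Qed.

Lemma perm_B_Pn r' n : perm_eq (B r' n) (Pn r'.+1 n).
Proof.
apply: uniq_perm; [exact: (uniq_B r' n).1|exact: uniq_Pn|].
by move=> w; rewrite mem_Pn (mem_B_rank n w).1.
Qed.

Lemma p_q r' n : p r'.+1 n = q r' n.
Proof. by rewrite /p -(perm_size (perm_B_Pn r' n)) (size_B r' n).1. Qed.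

Local Open Scope ring_scope.

Fixpoint stackE (R : pzRingType) (c a b : nat) (E : 'M[R]_(b, a)) : 'M[R]_(sz c a b, a) :=
  match c return 'M[R]_(sz c a b, a) with 0 => E
  | S c' => col_mx (1%:M : 'M_a) (stackE c' E) end.

Fixpoint Ub (R : pzRingType) (r' n : nat) : 'M[R]_(q r' n.+1, q r' n) :=
  match n return 'M[R]_(q r' n.+1, q r' n) with
  | 0 => col_mx 1%:M (stackE r' (0 : 'M[R]_(0, 1)))
  | S m => col_mx 1%:M (stackE r' (Ub R r' m)^T) end.

Lemma split_ord_cases m n (i : 'I_(m + n)) :
  (exists k : 'I_m, i = lshift n k) \/ (exists k : 'I_n, i = rshift m k).
Proof.
case: (splitP i) => k Hk; [left|right]; exists k; exact: val_inj.
Qed.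

Lemma stackE_entry (R : pzRingType) r' (c a b : nat) (E : 'M[R]_(b, a)) Bn Bm j :
  size Bn = a -> size Bm = b -> uniq Bn -> (j + c <= r'.+1)%N ->
  (forall z x, E z x = (covers (two :: nth [::] Bm z) (nth [::] Bn x))%:R) ->
  forall i x, stackE c E i x = (covers (nth [::] (@tailB r' j c Bn Bm) i) (nth [::] Bn x))%:R.
Proof.
move=> Sn Sm Un + HE; elim: c j => [|c IH] j Hc i x /=.
  by rewrite HE (nth_map [::]) // Sm.
case: (split_ord_cases i) => -[k ->].
  rewrite col_mxEu mxE nth_cat size_map Sn /= ltn_ord (nth_map [::]) ?Sn // covers_one.
  by rewrite nth_uniq ?Sn // eq_sym.
rewrite col_mxEd (IH j.+1) ?addSnnS // nth_cat size_map Sn /= ltnNge leq_addr /=.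
by rewrite addKn.
Qed.

Lemma col_entry (R : pzRingType) r' n (E : 'M[R]_(qm r' n, q r' n)) i j :
   (forall z x, E z x = (covers (two :: nth [::] (Bm r' n) z) (nth [::] (B r' n) x))%:R) ->
   (col_mx 1%:M (stackE r' E) : 'M_(q r' n.+1, q r' n)) i j =
     (covers (nth [::] (B r' n.+1) i) (nth [::] (B r' n) j))%:R.
Proof.
have top : forall k : 'I_(q r' n), nth [::] (B r' n.+1) k = one ord0 :: nth [::] (B r' n) k.
  move=> k; rewrite /B /= nth_cat size_map -/(B r' n) (size_B r' n).1 ltn_ord.
  by rewrite (nth_map [::]) ?(size_B r' n).1.
have bot : forall k, nth [::] (B r' n.+1) (q r' n + k) = nth [::] (tailB 1 r' (B r' n) (Bm r' n)) k.
  move=> k; rewrite /B /= nth_cat size_map -/(B r' n) (size_B r' n).1.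
  by rewrite ltnNge leq_addr /= addKn.
move=> HE; case: (split_ord_cases i) => -[k ->].
  rewrite col_mxEu mxE top covers_one.
  by rewrite nth_uniq ?(size_B r' n).1 ?(uniq_B r' n).1 // eq_sym.
rewrite col_mxEd (@stackE_entry _ r' _ _ _ _ (B r' n) (Bm r' n) 1%N) ?bot //.
- exact: (size_B r' n).1.
- exact: (size_B r' n).2.
- exact: (uniq_B r' n).1.
Qed.

Lemma Ub_entry (R : pzRingType) r' n i j :
  Ub R r' n i j = (covers (nth [::] (B r' n.+1) i) (nth [::] (B r' n) j))%:R.
Proof.
elim: n i j => [|n IH] i j; apply: col_entry => z x; first by case: z.
by rewrite mxE IH covers_two.
Qed.

Definition Pi (R : pzRingType) r' n : 'M[R]_(p r'.+1 n, q r' n) :=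
  \matrix_(i, j) (nth [::] (Pn r'.+1 n) i == nth [::] (B r' n) j)%:R.

Lemma sum_pick (R : pzRingType) (T : eqType) m (L : seq T) x0 (k : 'I_m) w (F : 'I_m -> R) :
  uniq L -> size L = m -> nth x0 L k = w ->
  \sum_(i < m) (nth x0 L i == w)%:R * F i = F k.
Proof.
move=> UL SL Hk; rewrite (bigD1 k) //= Hk eqxx mul1r big1 ?addr0 // => i Hi.
rewrite -Hk nth_uniq ?SL //; case: eqP => [/val_inj Hik|]; last by rewrite mul0r.
by rewrite Hik eqxx in Hi.
Qed.

Lemma sum_pick' (R : pzRingType) (T : eqType) m (L : seq T) x0 (k : 'I_m) w (F : 'I_m -> R) :
  uniq L -> size L = m -> nth x0 L k = w ->
  \sum_(i < m) F i * (nth x0 L i == w)%:R = F k.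
Proof.
move=> UL SL Hk; rewrite (bigD1 k) //= Hk eqxx mulr1 big1 ?addr0 // => i Hi.
rewrite -Hk nth_uniq ?SL //; case: eqP => [/val_inj Hik|]; last by rewrite mulr0.
by rewrite Hik eqxx in Hi.
Qed.

Lemma B_index r' n (w : seq (letter r'.+1)) : w \in Pn r'.+1 n ->
  exists k : 'I_(q r' n), nth [::] (B r' n) k = w.
Proof.
rewrite -(perm_mem (perm_B_Pn r' n)) => Hw.
have Hi : (index w (B r' n) < q r' n)%N by rewrite -(size_B r' n).1 index_mem.
by exists (Ordinal Hi); rewrite nth_index.
Qed.

Lemma Pn_index r' n (k : 'I_(q r' n)) : exists y : 'I_(p r'.+1 n), nth [::] (Pn r'.+1 n) y = nth [::] (B r' n) k.
Proof.
have Hw : nth [::] (B r' n) k \in Pn r'.+1 n.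
  by rewrite -(perm_mem (perm_B_Pn r' n)) mem_nth // (size_B r' n).1.
have Hi : (index (nth [::] (B r' n) k) (Pn r'.+1 n) < p r'.+1 n)%N by rewrite index_mem.
by exists (Ordinal Hi); rewrite nth_index.
Qed.

Lemma PiTPi (R : pzRingType) r' n : (Pi R r' n)^T *m Pi R r' n = 1%:M.
Proof.
apply/matrixP => i j; rewrite !mxE.
have [y Hy] := Pn_index i.
under eq_bigr => k _ do rewrite !mxE.
rewrite (@sum_pick _ _ _ _ _ y) ?uniq_Pn // Hy.
by rewrite nth_uniq ?(size_B r' n).1 ?(uniq_B r' n).1.
Qed.

Lemma PiPiT (R : pzRingType) r' n : Pi R r' n *m (Pi R r' n)^T = 1%:M.
Proof.
apply/matrixP => i j; rewrite !mxE.
have [k Hk] := B_index (mem_nth [::] (ltn_ord i)).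
under eq_bigr => l _ do rewrite !mxE eq_sym.
rewrite (@sum_pick _ _ _ _ _ k) ?(uniq_B r' n).1 ?(size_B r' n).1 // Hk.
by rewrite nth_uniq ?uniq_Pn // eq_sym.
Qed.

Lemma Umx_Ub r' n : Umx r'.+1 n = Pi int r' n.+1 *m Ub int r' n *m (Pi int r' n)^T.
Proof.
apply/matrixP => y x; rewrite !mxE.
have [k Hk] := B_index (mem_nth [::] (ltn_ord x)).
under eq_bigr => l _ do rewrite !mxE [_ == _]eq_sym.
rewrite (@sum_pick' _ _ _ _ _ k) ?(uniq_B r' n).1 ?(size_B r' n).1 //.
have [k' Hk'] := B_index (mem_nth [::] (ltn_ord y)).
under eq_bigr => l _ do rewrite !mxE eq_sym.
rewrite (@sum_pick _ _ _ _ _ k') ?(uniq_B r' n.+1).1 ?(size_B r' n.+1).1 //.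
by rewrite Ub_entry Hk Hk'; case: covers.
Qed.

Lemma coker_col1 (m k : nat) (Bk : 'M[int]_(k, m)) : coker_free (col_mx (1%:M : 'M_m) Bk).
Proof.
exists k, (row_mx (- Bk) 1%:M); split.
  by move=> y; exists (col_mx 0 y); rewrite mul_row_col mulmx0 add0r mul1mx.
move=> x; rewrite -[x]vsubmxK mul_row_col mul1mx mulNmx; split.
  move/eqP; rewrite addrC subr_eq0 => /eqP ->.
  by exists (usubmx x); rewrite mul_col_mx mul1mx.
case=> v; rewrite mul_col_mx mul1mx => /eq_col_mx [-> ->].
by rewrite addNr.
Qed.

Lemma coker_transfer (m n m' n' : nat) (A : 'M[int]_(m, n)) (P1 : 'M[int]_(m', m))
  (P0 : 'M[int]_(n', n)) :
  P1^T *m P1 = 1%:M -> P1 *m P1^T = 1%:M -> P0^T *m P0 = 1%:M ->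
  coker_free A -> coker_free (P1 *m A *m P0^T).
Proof.
move=> H1 H2 H0 [k [F [Fs Fk]]]; exists k, (F *m P1^T); split.
  move=> y; have [x Hx] := Fs y; exists (P1 *m x).
  by rewrite -mulmxA (mulmxA P1^T) H1 mul1mx.
move=> x; rewrite -mulmxA; split.
  move/Fk => [v Hv]; exists (P0 *m v).
  by rewrite -!mulmxA (mulmxA P0^T) H0 mul1mx -Hv mulmxA H2 mul1mx.
case=> v ->; apply/Fk; exists (P0^T *m v).
by rewrite !mulmxA H1 mul1mx.
Qed.

Lemma coker_Umx r' n : coker_free (Umx r'.+1 n).
Proof.
rewrite Umx_Ub; apply: coker_transfer; rewrite ?PiTPi ?PiPiT //.
by case: n => [|n] /=; apply: coker_col1.
Qed.

Lemma sz_eq r' a b : sz r' a b = (r' * a + b)%N.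
Proof. by elim: r' => [|c IH] //=; rewrite IH mulSn addnA. Qed.

Lemma q0 r' : q r' 0 = 1%N. Proof. by []. Qed.
Lemma qS r' m : q r' m.+1 = (q r' m + sz r' (q r' m) (qm r' m))%N.
Proof. by []. Qed.
Lemma qmS r' m : qm r' m.+1 = q r' m.
Proof. by []. Qed.
Lemma qSS r' m : q r' m.+2 = (r'.+1 * q r' m.+1 + q r' m)%N.
Proof. rewrite qS qmS sz_eq; lia. Qed.

Lemma q1 r' : q r' 1 = r'.+1. Proof. rewrite qS sz_eq /qm /q /=; lia. Qed.

Lemma q_mono r' m : (q r' m <= q r' m.+1)%N.
Proof. by case: m => [|m]; rewrite ?q1 ?q0 ?qSS //; lia. Qed.

Lemma q_pos r' m : (0 < q r' m)%N.
Proof. by elim: m => [|m IH] //; apply: leq_trans (q_mono r' m). Qed.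

Lemma q_monoL r' m k : (m <= k)%N -> (q r' m <= q r' k)%N.
Proof.
move=> /subnKC <-; elim: (k - m)%N => [|d IH]; first by rewrite addn0.
by rewrite addnS (leq_trans IH (q_mono _ _)).
Qed.

Lemma dp_pos r' k : dp r'.+1 k%:Z = if k is k'.+1 then (q r' k)%:Z - (q r' k')%:Z else 1.
Proof.
rewrite /dp; case: k => [|k]; first by rewrite /pz p_q q0.
have -> : (k.+1)%:Z - 1 = k%:Z by rewrite -addn1 PoszD addrK.
by rewrite /pz !p_q.
Qed.

Lemma dp_neg r k : dp r (Negz k) = 0.
Proof. by []. Qed.

Lemma dp_step r'' k : dp r''.+2 k%:Z <= dp r''.+2 k.+1%:Z.
Proof.
rewrite !dp_pos; case: k => [|k]; first by rewrite q1 q0; lia.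
rewrite qSS; have := q_mono r''.+1 k; lia.
Qed.

Lemma dp_monoL r'' k n : (k <= n)%N -> dp r''.+2 k%:Z <= dp r''.+2 n%:Z.
Proof.
move=> /subnKC <-; elim: (n - k)%N => [|d IH]; first by rewrite addn0.
by rewrite addnS (le_trans IH (dp_step _ _)).
Qed.

Lemma dp_nonneg r' n : 0 <= dp r'.+1 n%:Z.
Proof. rewrite dp_pos; case: n => [|n] //; have := q_mono r' n; lia. Qed.

Lemma part2 r' n j : (1 <= n)%N -> (1 <= j <= n)%N ->
  dp r'.+1 (n%:Z - j%:Z - (r'.+1 == 1%N)%:Z) <= dp r'.+1 n%:Z.
Proof.
move=> Hn /andP[Hj Hjn].
case: r' => [|r''].
  rewrite eqxx /=.
  case: (ltngtP n j) => Hnj; first lia.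
    have -> : n%:Z - j%:Z - 1 = ((n - j).-1)%:Z by lia.
    case: n Hn Hj Hnj Hjn => [|[|n]] // Hn Hj Hnj Hjn; first lia.
    have Hd : dp 1 n.+2%:Z = (q 0 n)%:Z by rewrite dp_pos qSS; lia.
    rewrite Hd dp_pos.
    case E: (n.+2 - j).-1%N => [|[|t]]; first by have := q_pos 0 n; lia.
      by rewrite q1 q0.
    rewrite qSS; have := q_monoL 0 (_ : (t <= n)%N); lia.
  rewrite Hnj; have -> : j%:Z - j%:Z - 1 = Negz 0 by lia.
  exact: dp_nonneg.
have -> : n%:Z - j%:Z - (r''.+2 == 1%N)%:Z = (n - j)%N%:Z by rewrite /=; lia.
apply: dp_monoL; exact: leq_subr.
Qed.

Lemma smith_small (S : comUnitRingType) n (A : 'M[S]_n) : (n <= 1)%N -> has_smith_form A.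
Proof.
move=> Hn; exists 1%:M, 1%:M; split; first exact: unitmx1; split; first exact: unitmx1.
split=> i j Hij.
  have Eij : i = j by apply/ord_inj; move: (ltn_ord i) (ltn_ord j); lia.
  by rewrite Eij eqxx in Hij.
by move: (ltn_ord i) (ltn_ord j); lia.
Qed.

Lemma smith_eqv (S : comUnitRingType) n (A P Q : 'M[S]_n) :
  P \in unitmx -> Q \in unitmx -> has_smith_form (P *m A *m Q) -> has_smith_form A.
Proof.
move=> HP HQ [P' [Q' [HP' [HQ' Hs]]]]; exists (P' *m P), (Q *m Q').
rewrite !unitmx_mul HP HP' HQ HQ'; do 2!split => //; move: Hs; by rewrite !mulmxA.
Qed.

Lemma smith_orth (S : comUnitRingType) m m' (e : m = m') (R : 'M[S]_(m', m)) (A : 'M[S]_m) :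
  R^T *m R = 1%:M -> has_smith_form A -> has_smith_form (R *m A *m R^T).
Proof.
case: m' / e in R * => HR [P [Q [HP [HQ Hs]]]].
have [HRT HRu] := mulmx1_unit HR.
exists (P *m R^T), (R *m Q); rewrite !unitmx_mul HP HQ HRT HRu; do 2!split => //.
by rewrite !mulmxA -(mulmxA P) HR mulmx1 -(mulmxA _ R^T) HR mulmx1.
Qed.

Lemma smith_scale (S : comUnitRingType) n (A : 'M[S]_n) c :
  has_smith_form A -> has_smith_form (c *: A).
Proof.
case=> P [Q [HP [HQ [Hd Hc]]]]; exists P, Q; do 2!split => //.
rewrite -scalemxAr -scalemxAl; set T := P *m A *m Q in Hd Hc *; split=> i j H.
  by rewrite mxE (Hd i j H) mulr0.
have [x Hx] := Hc i j H; exists x; rewrite [LHS]mxE [in RHS]mxE Hx; exact: mulrCA.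
Qed.

Lemma smith_block1 (S : comUnitRingType) p m (A : 'M[S]_m) :
  has_smith_form A -> has_smith_form (block_mx (1%:M : 'M_p) 0 0 A).
Proof.
case=> P [Q [HP [HQ [Hd Hc]]]].
exists (block_mx 1%:M 0 0 P), (block_mx 1%:M 0 0 Q).
rewrite !unitmxE !det_ublock !det1 !mul1r -!unitmxE HP HQ; do 2!split => //.
rewrite !mulmx_block; do 2!rewrite ?mulmx0 ?mul0mx ?mulmx1 ?mul1mx ?addr0 ?add0r.
set T := P *m A *m Q.
have E : forall (i j : 'I_(p + m)), block_mx (1%:M : 'M_p) 0 0 T i j =
   match split i, split j with inl i', inl j' => (i' == j')%:R
   | inr i', inr j' => T i' j' | _, _ => 0 end.
  move=> i j; rewrite /block_mx /row_mx /col_mx mxE.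
  by case: split => i'; rewrite mxE; case: split => j'; rewrite !mxE.
split=> i j; rewrite !E.
  case: (splitP i) => i' Hi; case: (splitP j) => j' Hj //.
    move=> Hne; suff -> : (i' == j') = false by [].
    by apply/negbTE; apply: contra Hne => /eqP Hij; apply/eqP/ord_inj; rewrite Hi Hj Hij.
  by move=> Hne; apply: Hd; apply: contra Hne => /eqP Hij; apply/eqP/ord_inj; rewrite Hi Hj Hij.
move=> Hji; case: (splitP i) => i' Hi; case: (splitP j) => j' Hj.
- by exists 1; rewrite !eqxx mulr1.
- by exists (T j' j'); rewrite eqxx mulr1.
- by move: (ltn_ord j'); lia.
- apply: Hc; move: Hji; rewrite Hi Hj; lia.
Qed.

Ltac msimp := rewrite ?mulmx0 ?mul0mx ?mulmx1 ?mul1mx ?addr0 ?add0r ?subr0 ?sub0r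
  ?mulNmx ?mulmxN ?opprK ?mul_scalar_mx ?mul_mx_scalar ?trmx1 ?trmx0 ?tr_scalar_mx ?scaler0.

Lemma S1 (S : comUnitRingType) p m (Z : 'M[S]_(m, p)) (c : S) :
  let U := col_mx (1%:M : 'M_p) Z in
  block_mx 1%:M 0 (- Z) 1%:M *m (c%:M + U *m U^T) *m block_mx 1%:M 0 Z 1%:M =
  block_mx (c%:M + U^T *m U) Z^T 0 c%:M.
Proof.
move=> U; rewrite /U tr_col_mx mul_col_row mul_row_col trmx1 (scalar_mx_block p m c) add_block_mx.
rewrite !mulmx_block; msimp; msimp.
have E : - (Z *m Z^T) + (c%:M + Z *m Z^T) = c%:M by rewrite addrCA addNr addr0.
rewrite E mul_scalar_mx mulmxDr mulmx1 mul_mx_scalar opprD subrK addNr.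
by rewrite addrA.
Qed.

Lemma unit_lblock (S : comUnitRingType) m n (X : 'M[S]_(n, m)) :
  block_mx (1%:M : 'M_m) 0 X (1%:M : 'M_n) \in unitmx.
Proof. by rewrite unitmxE det_lblock !det1 mulr1 unitr1. Qed.

Lemma unit_ublock (S : comUnitRingType) m n (X : 'M[S]_(m, n)) :
  block_mx (1%:M : 'M_m) X 0 (1%:M : 'M_n) \in unitmx.
Proof. by rewrite unitmxE det_ublock !det1 mulr1 unitr1. Qed.

Lemma unit_dblock (S : comUnitRingType) m n (X : 'M[S]_n) :
  X \in unitmx -> block_mx (1%:M : 'M_m) 0 0 X \in unitmx.
Proof. by rewrite !unitmxE det_ublock det1 mul1r. Qed.

Lemma smith_swap (S : comUnitRingType) m1 m2 (A : 'M[S]_m1) (B : 'M[S]_m2) :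
  has_smith_form (block_mx A 0 0 B) -> has_smith_form (block_mx B 0 0 A).
Proof.
move=> H.
have := @smith_orth S (m1 + m2) (m2 + m1) (addnC _ _)
   (block_mx 0 (1%:M : 'M_m2) (1%:M : 'M_m1) 0) _ _ H.
rewrite tr_block_mx !trmx0 trmx1 !mulmx_block; msimp; msimp.
apply; by rewrite -scalar_mx_block.
Qed.

Lemma S2 (S : comUnitRingType) p k (Y : 'M[S]_(k, p)) (A : 'M[S]_p) (c : S) :
  block_mx 1%:M 0 0 (block_mx 1%:M Y^T 0 1%:M) *m
    block_mx A (row_mx (1%:M : 'M_p) Y^T) 0 (c%:M : 'M_(p + k)) *m
  block_mx 1%:M 0 0 (block_mx 1%:M (- Y^T) 0 1%:M) =
  block_mx A (row_mx (1%:M : 'M_p) 0) 0 (c%:M : 'M_(p + k)).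
Proof.
rewrite !mulmx_block; msimp; msimp.
rewrite mul_row_block; msimp; rewrite addNr.
rewrite -scalemxAl mulmx_block; msimp; msimp; rewrite addNr -scalar_mx_block.
by rewrite scalemx1.
Qed.

Lemma S3 (S : comUnitRingType) p k (A : 'M[S]_p) (c : S) :
  block_mx 1%:M 0 (- (c *: col_mx (1%:M : 'M_p) (0 : 'M_(k, p)))) 1%:M *m
    block_mx A (row_mx (1%:M : 'M_p) 0) 0 (c%:M : 'M_(p + k)) *m
  block_mx 1%:M 0 (col_mx (- A) (0 : 'M_(k, p))) 1%:M =
  block_mx 0 (row_mx (1%:M : 'M_p) (0 : 'M_(p, k))) (col_mx (- (c *: A)) 0)
     (block_mx (0 : 'M_p) 0 0 (c%:M : 'M_k)).
Proof.
rewrite !mulmx_block; msimp; msimp.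
rewrite mul_row_col -!scalemxAl mul_col_row; msimp; rewrite addrN.
rewrite (scalar_mx_block p k c) scale_block_mx scalemx1 !scaler0 opp_block_mx !oppr0.
rewrite add_block_mx addNr !addr0 add0r mul_block_col; msimp; msimp.
by rewrite col_mx0 addr0 mul_col_mx mul1mx mul0mx scale_col_mx opp_col_mx scaler0 oppr0.
Qed.

Lemma S4 (S : comUnitRingType) p k (A : 'M[S]_p) (c : S) :
  let Q4 := block_mx (0 : 'M_p) (row_mx (1%:M : 'M_p) (0 : 'M_(p, k)))
             (col_mx (1%:M : 'M_p) (0 : 'M_(k, p))) (block_mx (0 : 'M_p) 0 0 (1%:M : 'M_k)) in
  (Q4 *m Q4 = 1%:M) /\
  (block_mx 0 (row_mx (1%:M : 'M_p) (0 : 'M_(p, k))) (col_mx (- (c *: A)) 0)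
     (block_mx (0 : 'M_p) 0 0 (c%:M : 'M_k)) *m Q4 =
  block_mx 1%:M 0 0 (block_mx (- (c *: A)) 0 0 c%:M)).
Proof.
move=> Q4; rewrite /Q4 !mulmx_block; msimp; msimp.
rewrite !mul_row_col !mul_col_row ?mul_row_block ?mul_block_col; msimp; msimp.
rewrite !add_block_mx; msimp; msimp.
by rewrite row_mx0 col_mx0 -!scalar_mx_block.
Qed.


Lemma smith_A (S : comUnitRingType) p k (Y : 'M[S]_(k, p)) (c : S) :
  let U := col_mx (1%:M : 'M_p) (col_mx (1%:M : 'M_p) Y) in
  has_smith_form (c%:M + U^T *m U) -> has_smith_form (c%:M + U *m U^T).
Proof.
move=> U HA; set A := c%:M + U^T *m U in HA.
pose Z := col_mx (1%:M : 'M_p) Y.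
apply: (@smith_eqv _ _ _ (block_mx 1%:M 0 (- Z) 1%:M) (block_mx 1%:M 0 Z 1%:M));
  try exact: unit_lblock.
rewrite S1 -/A /Z tr_col_mx trmx1.
apply: (@smith_eqv _ _ _ (block_mx 1%:M 0 0 (block_mx 1%:M Y^T 0 1%:M))
   (block_mx 1%:M 0 0 (block_mx 1%:M (- Y^T) 0 1%:M))); try exact/unit_dblock/unit_ublock.
rewrite S2.
apply: (@smith_eqv _ _ _ (block_mx 1%:M 0 (- (c *: col_mx (1%:M : 'M_p) (0 : 'M_(k, p)))) 1%:M)
   (block_mx 1%:M 0 (col_mx (- A) (0 : 'M_(k, p))) 1%:M)); try exact: unit_lblock.
rewrite S3.
have [H4 H4'] := S4 k A c.
have HQ4 := (mulmx1_unit H4).1.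
apply: (@smith_eqv _ _ _ 1%:M _ (unitmx1 _ _) HQ4).
rewrite mul1mx H4'.
apply: smith_block1.
have -> : block_mx (- (c *: A)) 0 0 c%:M = c *: block_mx (- A) 0 0 (1%:M : 'M_k).
  by rewrite scale_block_mx scalerN !scaler0 scalemx1.
apply: smith_scale; apply: smith_swap; apply: smith_block1.
by rewrite -scaleN1r; apply: smith_scale.
Qed.

Definition Phi (S : comUnitRingType) m1 m2 (d f : S) (V : 'M[S]_(m1, m2)) : 'M[S]_(m1 + m2) :=
  block_mx (d *: ((f + 1)%:M + V *m V^T)) (d *: V) 0 (f%:M).

Lemma B1 (S : comUnitRingType) b b' (Y : 'M[S]_(b', b)) (d f : S) :
  block_mx (block_mx 1%:M 0 (- Y) 1%:M) 0 0 1%:M *m Phi d f (col_mx (1%:M : 'M_b) Y) =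
  block_mx (block_mx (d * (f + 2))%:M (d *: Y^T) ((- (d * (f + 1))) *: Y) (d * (f + 1))%:M)
     (col_mx d%:M 0) 0 f%:M.
Proof.
rewrite /Phi tr_col_mx trmx1 mul_col_row (scalar_mx_block b b' (f + 1)) add_block_mx.
rewrite scale_block_mx scale_col_mx !mulmx_block; msimp; msimp.
rewrite mul_block_col; msimp; msimp.
set G := Y *m Y^T.
congr block_mx; [congr block_mx|congr col_mx];
  rewrite -?scalemxAr ?mulmxDr ?mulmxDl -?scalemxAl ?mul_mx_scalar ?mul_scalar_mx ?mulmx1 ?mul1mx -/G;
  apply/matrixP => i j; rewrite !mxE; ring.
Qed.

Ltac mxring G :=
  rewrite -?scalemxAr ?mulmxDr ?mulmxDl -?scalemxAl ?mul_mx_scalar ?mul_scalar_mx ?mulmx1 ?mul1mx -/G;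
  apply/matrixP => i j; rewrite !mxE; ring.

Lemma B2 (S : comUnitRingType) b b' (Y : 'M[S]_(b', b)) (d f : S) :
  block_mx (block_mx (d * (f + 2))%:M (d *: Y^T) ((- (d * (f + 1))) *: Y) (d * (f + 1))%:M)
     (col_mx d%:M 0) 0 f%:M *m
  block_mx 1%:M 0 (row_mx (- (f + 2))%:M (0 : 'M_(b, b'))) 1%:M =
  block_mx (block_mx 0 (d *: Y^T) ((- (d * (f + 1))) *: Y) (d * (f + 1))%:M)
     (col_mx d%:M 0) (row_mx (- (f * (f + 2)))%:M 0) f%:M.
Proof.
rewrite !mulmx_block; msimp; msimp.
rewrite mul_col_row; msimp; msimp; rewrite add_block_mx; msimp.
rewrite scale_row_mx scaler0.
set G := Y *m Y^T.
congr block_mx; [congr block_mx|congr row_mx]; mxring G.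
Qed.

Lemma B3 (S : comUnitRingType) b b' (Y : 'M[S]_(b', b)) (d f al be : S) :
  al * d + be * f = 1 ->
  block_mx (block_mx f%:M 0 0 1%:M) (col_mx (- d)%:M 0) (row_mx al%:M 0) be%:M *m
  block_mx (block_mx 0 (d *: Y^T) ((- (d * (f + 1))) *: Y) (d * (f + 1))%:M)
     (col_mx d%:M 0) (row_mx (- (f * (f + 2)))%:M (0 : 'M_(b, b'))) f%:M =
  block_mx (block_mx (d * f * (f + 2))%:M ((d * f) *: Y^T) ((- (d * (f + 1))) *: Y) (d * (f + 1))%:M)
     0 (row_mx (- (be * f * (f + 2)))%:M ((al * d) *: Y^T)) (1%:M : 'M_b).
Proof.
move=> H; rewrite !mulmx_block; msimp; msimp.
rewrite !mul_block_col !mul_row_block !mul_col_row !mul_row_col; msimp; msimp.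
rewrite !add_block_mx !scale_col_mx !add_col_mx !scale_row_mx !add_row_mx; msimp; msimp.
set G := Y *m Y^T.
congr block_mx.
- congr block_mx; mxring G.
- apply/eqP; rewrite col_mx_eq0; apply/andP; split; apply/eqP; mxring G.
- congr row_mx; mxring G.
- rewrite -H; mxring G.
Qed.

Lemma B3unit (S : comUnitRingType) b b' (d f al be : S) :
  al * d + be * f = 1 ->
  block_mx (block_mx f%:M 0 0 (1%:M : 'M_b')) (col_mx (- d)%:M 0) (row_mx al%:M 0) (be%:M : 'M_b)
  \in unitmx.
Proof.
move=> H.
have := @mulmx1_unit _ _
  (block_mx (block_mx f%:M 0 0 (1%:M : 'M_b')) (col_mx (- d)%:M 0) (row_mx al%:M 0) (be%:M : 'M_b))
  (block_mx (block_mx be%:M 0 0 (1%:M : 'M_b')) (col_mx d%:M 0) (row_mx (- al)%:M 0) (f%:M : 'M_b)).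
case; last by [].
rewrite !mulmx_block; msimp; msimp.
rewrite !mul_block_col !mul_row_block !mul_col_row !mul_row_col; msimp; msimp.
rewrite !add_block_mx ?scale_col_mx ?scale_row_mx ?add_col_mx ?add_row_mx; msimp; msimp.
rewrite (scalar_mx_block (b + b') b) (scalar_mx_block b b').
congr block_mx.
- congr block_mx; apply/matrixP => i j; rewrite !mxE -?H; ring.
- apply/eqP; rewrite col_mx_eq0; apply/andP; split; apply/eqP; apply/matrixP => i j; rewrite !mxE; ring.
- apply/eqP; rewrite row_mx_eq0; apply/andP; split; apply/eqP; apply/matrixP => i j; rewrite !mxE; ring.
- apply/matrixP => i j; rewrite !mxE -H; ring.
Qed.

Lemma B4 (S : comUnitRingType) b b' (X : 'M[S]_(b + b')) (L : 'M[S]_(b, b + b')) :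
  block_mx X 0 L (1%:M : 'M_b) *m block_mx 1%:M 0 (- L) 1%:M = block_mx X 0 0 1%:M.
Proof. by rewrite mulmx_block; msimp; msimp; rewrite addrN. Qed.

Lemma B5 (S : comUnitRingType) b b' (Y : 'M[S]_(b', b)) (d f : S) :
  block_mx (block_mx (d * f * (f + 2))%:M ((d * f) *: Y^T) ((- (d * (f + 1))) *: Y) (d * (f + 1))%:M)
     0 0 (1%:M : 'M_b) *m block_mx (block_mx 1%:M 0 Y 1%:M) 0 0 1%:M =
  block_mx (d *: Phi f (f + 1) Y^T) 0 0 1%:M.
Proof.
rewrite mulmx_block; msimp; msimp.
rewrite /Phi trmxK mulmx_block; msimp; msimp.
rewrite scale_block_mx scaler0.
set G := Y^T *m Y.
congr block_mx; congr block_mx; mxring G.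
Qed.

Lemma unit_dblockl (S : comUnitRingType) m n (X : 'M[S]_m) :
  X \in unitmx -> block_mx X 0 0 (1%:M : 'M_n) \in unitmx.
Proof. by rewrite !unitmxE det_ublock det1 mulr1. Qed.

Lemma smith_B (S : comUnitRingType) b b' (Y : 'M[S]_(b', b)) (d f al be : S) :
  al * d + be * f = 1 -> has_smith_form (Phi f (f + 1) Y^T) ->
  has_smith_form (Phi d f (col_mx (1%:M : 'M_b) Y)).
Proof.
move=> H HP.
apply: (@smith_eqv _ _ _ (block_mx (block_mx 1%:M 0 (- Y) 1%:M) 0 0 1%:M)
   (block_mx 1%:M 0 (row_mx (- (f + 2))%:M (0 : 'M_(b, b'))) 1%:M)).
- exact/unit_dblockl/unit_lblock.
- exact: unit_lblock.
rewrite B1 B2.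
apply: (@smith_eqv _ _ _ _ 1%:M (B3unit b b' H) (unitmx1 _ _)).
rewrite mulmx1 B3 //.
apply: (@smith_eqv _ _ _ 1%:M
  (block_mx 1%:M 0 (- row_mx (- (be * f * (f + 2)))%:M ((al * d) *: Y^T)) 1%:M)
  (unitmx1 _ _) (unit_lblock _)).
rewrite mul1mx B4.
apply: (@smith_eqv _ _ _ 1%:M _ (unitmx1 _ _) (unit_dblockl _ (unit_lblock Y))).
rewrite mul1mx B5.
by apply: smith_swap; apply: smith_block1; apply: smith_scale.
Qed.

Lemma stackE_TT (R : comUnitRingType) c a b (E : 'M[R]_(b, a)) :
  (stackE c E)^T *m stackE c E = (c%:R)%:M + E^T *m E.
Proof.
elim: c => [|c IH] /=; first by rewrite mulr0n raddf0 add0r.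
by rewrite tr_col_mx mul_row_col trmx1 mul1mx IH addrA -raddfD -natr1 (addrC 1).
Qed.

Lemma Ub_TT0 (R : comUnitRingType) r' : (Ub R r' 0)^T *m Ub R r' 0 = (r'.+1%:R)%:M.
Proof.
rewrite /= tr_col_mx mul_row_col trmx1 mul1mx stackE_TT trmx0 mul0mx addr0.
by rewrite -raddfD -natr1 (addrC 1).
Qed.

Lemma Ub_TTS (R : comUnitRingType) r' m :
  (Ub R r' m.+1)^T *m Ub R r' m.+1 = (r'.+1%:R)%:M + Ub R r' m *m (Ub R r' m)^T.
Proof.
rewrite [Ub R r' m.+1]/= tr_col_mx mul_row_col trmx1 mul1mx stackE_TT trmxK.
by rewrite addrA -raddfD -natr1 (addrC 1).
Qed.

Lemma Ub_shape2 (R : comUnitRingType) r'' m :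
  exists Y : 'M[R]_(sz r'' (q r''.+1 m) (qm r''.+1 m), q r''.+1 m),
  Ub R r''.+1 m = col_mx 1%:M (col_mx 1%:M Y).
Proof. by case: m => [|m] /=; eexists. Qed.

Lemma smith_r2 r'' n (c : {poly int}) :
  has_smith_form (c%:M + (Ub _ r''.+1 n)^T *m Ub _ r''.+1 n).
Proof.
elim: n c => [|m IH] c; first by apply: smith_small.
rewrite Ub_TTS addrA -raddfD.
have [Y E] := Ub_shape2 {poly int} r'' m.
rewrite E; apply: smith_A; rewrite -E; exact: IH.
Qed.

Lemma smith_chain1 m (d f : {poly int}) :
  (exists al be, al * d + be * f = 1) -> has_smith_form (Phi d f (Ub _ 0 m)).
Proof.
elim: m d f => [|m IH] d f [al [be H]].
  apply: (smith_B H); apply: smith_small => //.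
apply: (smith_B H); rewrite trmxK; apply: IH.
by exists (-1), 1; rewrite mulN1r mul1r addKr.
Qed.

Lemma smith_r1 n (c : {poly int}) :
  has_smith_form (c%:M + (Ub _ 0 n)^T *m Ub _ 0 n).
Proof.
case: n => [|[|m]]; try by apply: smith_small.
rewrite Ub_TTS addrA -raddfD.
apply: (@smith_eqv _ _ _ (block_mx 1%:M 0 (- (Ub _ 0 m)^T) 1%:M) (block_mx 1%:M 0 (Ub _ 0 m)^T 1%:M));
  try exact: unit_lblock.
rewrite [Ub _ 0 m.+1]/= S1 Ub_TTS trmxK.
have -> : block_mx ((c + 1%:R)%:M + ((0%N.+1%:R)%:M + Ub _ 0 m *m (Ub _ 0 m)^T)) (Ub _ 0 m) 0
   (c + 1%:R)%:M = Phi 1 (c + 1%:R) (Ub _ 0 m).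
  by rewrite /Phi !scale1r addrA -raddfD.
move: (@smith_chain1 m 1 (c + 1%:R)) => H; apply: H.
by exists 1, 0; rewrite mulr1 mul0r addr0.
Qed.


Lemma map_Pi r' n : map_mx polyC (Pi int r' n) = Pi {poly int} r' n.
Proof. by apply/matrixP => i j; rewrite !mxE; case: (_ == _). Qed.

Lemma map_Ub r' n : map_mx polyC (Ub int r' n) = Ub {poly int} r' n.
Proof. by apply/matrixP => i j; rewrite !mxE !Ub_entry; case: covers. Qed.

Lemma DUt_eq r' n : DUt r'.+1 n =
  Pi _ r' n *m ('X%:M + (Ub _ r' n)^T *m Ub _ r' n) *m (Pi _ r' n)^T.
Proof.
rewrite /DUt /DUmx Umx_Ub !trmx_mul trmxK.
rewrite -!mulmxA (mulmxA (Pi int r' n.+1)^T) PiTPi mul1mx !mulmxA.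
rewrite !map_mxM -!map_trmx map_Pi map_Ub mulmxDr mulmxDl addrC.
congr (_ + _); last by rewrite !mulmxA.
by rewrite mul_mx_scalar -scalemxAl PiPiT scalemx1.
Qed.

Lemma part1 r' n : has_smith_form (DUt r'.+1 n).
Proof.
rewrite DUt_eq; apply: (smith_orth (esym (p_q r' n))); first exact: PiTPi.
case: r' => [|r'']; [exact: smith_r1|exact: smith_r2].
Qed.

Theorem theorem5p1 (r : nat) (hr : (1 <= r)%N) :
  (forall n : nat, has_smith_form (DUt r n)) /\
  (forall n j : nat, (1 <= n)%N -> (1 <= j <= n)%N ->
     dp r (n%:Z - j%:Z - (r == 1%N)%:Z) <= dp r n%:Z) /\
  (forall n : nat, coker_free (Umx r n)).
Proof.
case: r hr => [//|r'] _; split; [exact: part1|split; [exact: part2|exact: coker_Umx]].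
Qed.
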